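(* Let $f:\mathcal{X}\to\mathbb{R}$ be convex and $\beta$-smooth with diagonally dominant Hessian everywhere, where $\mathcal{X}\subseteq\mathbb{R}^d$ is convex. Then for any $x,y\in\mathcal{X}$ and step size $\eta\le 2/\beta$, $$\|(x-\eta\nabla f(x))-(y-\eta\nabla f(y))\|_\infty\le\|x-y\|_\infty.$$
   Context: $\beta$-smooth means $\|\nabla^2f(x)\|_\infty\le\beta$ for all $x\in\mathcal{X}$, where for a symmetric matrix $\|A\|_\infty=\max_i\sum_j|A_{ij}|$. A matrix $A$ is diagonally dominant if $|A_{ii}|\ge\sum_{j\ne i}|A_{ij}|$ for all $i$. *)

(* Defs.v *)
From HB Require Import structures.
From mathcomp Require Import all_boot all_order all_algebra.
From mathcomp Require Import all_classical all_reals all_analysis.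
Set Implicit Arguments. Unset Strict Implicit. Unset Printing Implicit Defensive.
Import Order.TTheory GRing.Theory Num.Theory.
Import numFieldNormedType.Exports.
Local Open Scope classical_set_scope.
Local Open Scope ring_scope.

Section Defs.
Variables (R : realType) (d : nat).

Definition basisv (i : 'I_d) : 'rV[R]_d := \row_j (i == j)%:R.

Definition grad (f : 'rV[R]_d -> R) (x : 'rV[R]_d) : 'rV[R]_d :=
  \row_i derive f x (basisv i).

Definition hess (f : 'rV[R]_d -> R) (x : 'rV[R]_d) : 'M[R]_d :=
  \matrix_(i, j) (derive (grad f) x (basisv j)) 0 i.

Definition vnorm_inf (v : 'rV[R]_d) : R := \big[Num.max/0]_i `|v 0 i|.

Definition mnorm_inf (A : 'M[R]_d) : R :=
  \big[Num.max/0]_i \sum_j `|A i j|.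

Definition diag_dominant (A : 'M[R]_d) : Prop :=
  forall i : 'I_d, \sum_(j | j != i) `|A i j| <= `|A i i|.

Definition convex_set_in (X : set 'rV[R]_d) : Prop :=
  forall x y, X x -> X y -> forall t : R, 0 <= t <= 1 ->
    X (t *: x + (1 - t) *: y).

Definition convex_on (X : set 'rV[R]_d) (f : 'rV[R]_d -> R) : Prop :=
  forall x y, X x -> X y -> forall t : R, 0 <= t <= 1 ->
    f (t *: x + (1 - t) *: y) <= t * f x + (1 - t) * f y.

End Defs.

(* Main.v *)
Require Import Defs.
From HB Require Import structures.
From mathcomp Require Import all_boot all_order all_algebra.
From mathcomp Require Import all_classical all_reals all_analysis.
From mathcomp Require Import ring lra.
Import Order.TTheory GRing.Theory Num.Theory.
Import numFieldNormedType.Exports.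
Local Open Scope classical_set_scope.
Local Open Scope ring_scope.

Section H.
Variables (R : realType) (d : nat).
Implicit Types (F : 'rV[R]_d -> 'rV[R]_d).

Lemma is_derive_coord F z v (i : 'I_d) df : is_derive z v F df ->
  is_derive z v (fun w => F w 0 i) (df 0 i).
Proof.
move=> [dF vF].
have E : (fun h : R => h^-1 *: (((fun w => F w 0 i) \o shift z) (h *: v) - F z 0 i))
   = (fun M : 'rV[R]_d => M 0 i) \o (fun h : R => h^-1 *: ((F \o shift z) (h *: v) - F z)).
  by apply/funext => h /=; rewrite !mxE.
have C : (fun h : R => h^-1 *: (((fun w => F w 0 i) \o shift z) (h *: v) - F z 0 i)) @ 0^' --> df 0 i.
  rewrite E; apply: continuous_cvg; first exact: coord_continuous.
  by rewrite -vF; exact: dF.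
split; first by apply/cvg_ex; exists (df 0 i).
exact: cvg_lim C.
Qed.

Lemma is_derive_line (W : normedModType R) (G : 'rV[R]_d -> W) (h : R -> W) z v t :
  (forall s, h (s + t) = G (s *: v + z)) -> derivable G z v ->
  is_derive t 1 h ('D_v G z).
Proof.
move=> hE dG.
have E : (fun s : R => s^-1 *: ((h \o shift t) (s *: 1) - h t))
   = (fun s : R => s^-1 *: ((G \o shift z) (s *: v) - G z)).
  apply/funext => s /=; rewrite hE -[t]add0r hE scale0r add0r.
  by congr (_ *: (G _ - _)); rewrite /GRing.scale /= mulr1.
split; first by rewrite /derivable E.
by rewrite /derive E.
Qed.

Lemma D_grad_sum (f : 'rV[R]_d -> R) z v (i : 'I_d) :
  differentiable (grad f) z ->
  ('D_v (grad f) z) 0 i = \sum_j v 0 j * hess f z i j.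
Proof.
move=> df.
have vE : v = \sum_j v 0 j *: basisv R j.
  apply/rowP => k; rewrite summxE. rewrite (bigD1 k) //=. rewrite !mxE eqxx mulr1 big1 ?addr0 //.
  by move=> j /negbTE jk; rewrite !mxE jk mulr0.
rewrite deriveE // {1}vE linear_sum summxE; apply: eq_bigr => j _.
by rewrite linearZ mxE /hess mxE deriveE.
Qed.

Lemma coord_mvt (f : 'rV[R]_d -> R) (X : set 'rV[R]_d) (eta : R) x y (i : 'I_d) :
  convex_set_in X -> (forall z, X z -> differentiable (grad f) z) -> X x -> X y ->
  exists c, X c /\ ((x - eta *: grad f x) - (y - eta *: grad f y)) 0 i
     = (x - y) 0 i - eta * \sum_j (x - y) 0 j * hess f c i j.
Proof.
move=> cX dgf Xx Xy.
set v := x - y.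
pose z t : 'rV[R]_d := t *: v + y.
have zX (t : R) : 0 <= t <= 1 -> X (z t).
  move=> t01; have := cX x y Xx Xy t t01.
  congr X; rewrite /z /v scalerBr scalerBl scale1r.
  by rewrite addrCA addrC.
pose G (w : 'rV[R]_d) : R := (w - eta *: grad f w) 0 i.
have dG w : X w -> is_derive w v G (v 0 i - eta * \sum_j v 0 j * hess f w i j).
  move=> Xw.
  have dg : derivable (grad f) w v by apply: diff_derivable; exact: dgf.
  have H1 : is_derive w v (fun w => w - eta *: grad f w) (v - eta *: 'D_v (grad f) w).
    apply: is_deriveB; apply: is_deriveZ; exact: derivableP.
  have := is_derive_coord _ _ _ i _ H1.
  by rewrite !mxE D_grad_sum //; exact: dgf.
pose h (t : R) : R := G (z t).
have hd (t : R) : 0 <= t <= 1 -> is_derive t 1 h ('D_v G (z t)).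
  move=> t01; apply: is_derive_line.
    by move=> s; rewrite /h /z scalerDl addrA.
  by have := dG _ (zX t t01) => -[].
have [c c01 Hc] : exists2 c, c \in `]0, 1[%R & h 1 - h 0 = 'D_v G (z c) * (1 - 0).
  apply: (@MVT R h (fun t => 'D_v G (z t)) 0 1 ltr01).
    move=> t; rewrite in_itv /= => /andP[t0 t1]; apply: hd.
    by rewrite !ltW.
  apply: derivable_within_continuous => t; rewrite in_itv /= => t01.
  by have [] := hd t t01.
have c01' : 0 <= c <= 1 by move: c01; rewrite in_itv /= => /andP[? ?]; rewrite !ltW.
exists (z c); split; first exact: zX.
move: Hc; rewrite subr0 mulr1 (@derive_val _ _ _ _ _ _ _ (dG _ (zX c c01'))).
rewrite /h /G /z scale1r scale0r add0r /v subrK => <-.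
by rewrite !mxE.
Qed.

Lemma hess_diag_ge0 (f : 'rV[R]_d -> R) (X : set 'rV[R]_d) x (i : 'I_d) :
  open X -> convex_on X f -> (forall z, X z -> differentiable f z) ->
  (forall z, X z -> differentiable (grad f) z) -> X x -> 0 <= hess f x i i.
Proof.
move=> oX cf df dgf Xx.
set e := basisv R i.
pose psi (w : 'rV[R]_d) : R := grad f w 0 i.
have psiE w : psi w = 'D_e f w by rewrite /psi mxE.
have Dpsi : is_derive x e psi (hess f x i i).
  have H := is_derive_coord _ _ _ i _ (derivableP (@diff_derivable _ _ _ _ _ e (dgf x Xx))).
  by rewrite /hess mxE; exact: H.
pose q (s : R) : R := s^-1 *: ((psi \o shift x) (s *: e) - psi x).
have qcvg : q @ 0^' --> hess f x i i.
  have [dv <-] := Dpsi; exact: dv.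
rewrite leNgt; apply/negP => L0.
have N2 : nbhs (0 : R) [set s | s != 0 -> q s < 0].
  exact: (cvgr_lt _ qcvg _ L0).
have N1 : nbhs (0 : R) [set s | X (s *: e + x)].
  have Hc : {for 0, continuous (fun s : R => s *: e + x)}.
    apply: continuousD.
      exact: scalel_continuous.
    exact: cst_continuous.
  apply: Hc; rewrite /= scale0r add0r; apply: open_nbhs_nbhs; split => //.
have [r r0 Hr] := iffLR (nbhs_ballP _ _) (filterI N1 N2).
have Hs (s : R) : `|s| < r -> X (s *: e + x) /\ (s != 0 -> q s < 0).
  move=> sr; apply: Hr; rewrite /ball /= sub0r normrN //.
pose phi (s : R) : R := f (s *: e + x).
have dphi (c : R) : `|c| < r -> is_derive c 1 phi (psi (c *: e + x)).
  move=> cr; rewrite psiE; apply: is_derive_line => [s|].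
    by rewrite /phi scalerDl addrA.
  apply: diff_derivable; apply: df; exact: (Hs c cr).1.
have qneg (c : R) : `|c| < r -> c != 0 -> c^-1 * (psi (c *: e + x) - psi x) < 0.
  by move=> cr cn0; have := (Hs c cr).2 cn0.
pose t := r / 2.
have t0 : 0 < t by rewrite divr_gt0.
have tr : t < r by rewrite /t ltr_pdivrMr // ltr_pMr // ltr1n.
have inr (c : R) : -t <= c <= t -> `|c| < r.
  by move=> /andP[c1 c2]; rewrite ltr_norml; apply/andP; split; lra.
have dI (a b : R) : -t <= a -> b <= t -> forall c, c \in `]a, b[%R ->
    is_derive c 1 phi (psi (c *: e + x)).
  move=> ha hb c; rewrite in_itv /= => /andP[h1 h2]; apply: dphi; apply: inr.
  apply/andP; split; lra.
have cI (a b : R) : -t <= a -> b <= t -> {within `[a, b], continuous phi}.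
  move=> ha hb; apply: derivable_within_continuous => c.
  rewrite in_itv /= => /andP[h1 h2].
  have [] // := dphi c (inr c _); apply/andP; split; lra.
have [c1 c1I E1] := @MVT R phi (fun c => psi (c *: e + x)) 0 t t0
  (dI 0 t (ltac:(lra)) (lexx t)) (cI 0 t (ltac:(lra)) (lexx t)).
have t0' : -t < 0 by rewrite oppr_lt0.
have [c2 c2I E2] := @MVT R phi (fun c => psi (c *: e + x)) (-t) 0 t0'
  (dI (-t) 0 (lexx _) (ltac:(lra))) (cI (-t) 0 (lexx _) (ltac:(lra))).
move: c1I c2I; rewrite !in_itv /= => /andP[c10 c1t] /andP[c2t c20].
have D1 : psi (c1 *: e + x) < psi x.
  have c1r : `|c1| < r by apply: inr; apply/andP; split; lra.
  have := qneg c1 c1r (lt0r_neq0 c10).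
  by rewrite pmulr_rlt0 ?invr_gt0 // subr_lt0.
have D2 : psi x < psi (c2 *: e + x).
  have c2r : `|c2| < r by apply: inr; apply/andP; split; lra.
  have := qneg c2 c2r (ltr0_neq0 c20).
  by rewrite nmulr_rlt0 ?invr_lt0 // subr_gt0.
have A1 : phi t - phi 0 < psi x * t by rewrite E1 subr0 ltr_pM2r.
have A2 : psi x * t < phi 0 - phi (-t) by rewrite E2 sub0r opprK ltr_pM2r.
have tI : -t <= t <= t by apply/andP; split; lra.
have tI' : -t <= -t <= t by apply/andP; split; lra.
have Xa : X (t *: e + x) := (Hs t (inr t tI)).1.
have Xb : X ((-t) *: e + x) := (Hs (-t) (inr _ tI')).1.
have h01 : 0 <= (2^-1 : R) <= 1.
  apply/andP; split; lra.
have := cf _ _ Xa Xb _ h01.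
have -> : 2^-1 *: (t *: e + x) + (1 - 2^-1) *: ((-t) *: e + x) = 0 *: e + x.
  have -> : (1 - 2^-1 : R) = 2^-1 by field.
  rewrite -scalerDr addrACA scaleNr subrr add0r scale0r add0r.
  by rewrite -mulr2n -[x *+ 2]scaler_nat scalerA mulVf ?scale1r // pnatr_eq0.
rewrite -/(phi t) -/(phi (-t)) -/(phi 0).
lra.
Qed.
End H.

Theorem lemma3p2 (R : realType) (d : nat) (X : set 'rV[R]_d)
  (f : 'rV[R]_d -> R) (beta eta : R) :
  open X -> convex_set_in X ->
  (forall x, X x -> differentiable f x) ->
  (forall x, X x -> differentiable (grad f) x) ->
  convex_on X f ->
  0 < beta ->
  (forall x, X x -> mnorm_inf (hess f x) <= beta) ->
  (forall x, X x -> diag_dominant (hess f x)) ->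
  0 < eta -> eta <= 2 / beta ->
  forall x y, X x -> X y ->
    vnorm_inf ((x - eta *: grad f x) - (y - eta *: grad f y)) <= vnorm_inf (x - y).
Proof.
move=> oX cX df dgf cf b0 hb hdd e0 eb x y Xx Xy.
have eb2 : eta * beta <= 2 by rewrite -ler_pdivlMr.
set v := x - y.
set N := vnorm_inf v.
have vN j : `|v 0 j| <= N by rewrite /N /vnorm_inf; exact: le_bigmax.
have N0 : 0 <= N.
  rewrite /N /vnorm_inf; elim/big_rec: _ => //= j a _ ha.
  by rewrite le_max ha orbT.
rewrite /vnorm_inf; apply: bigmax_le => // i _.
have [c [Xc ->]] := @coord_mvt R d f X eta x y i cX dgf Xx Xy.
set H := hess f c.
have Hii0 : 0 <= H i i by exact: (@hess_diag_ge0 R d f X c i oX cf df dgf Xc).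
set s := \sum_(j | j != i) `|H i j|.
have hs : s <= H i i by rewrite -[H i i]ger0_norm //; exact: hdd.
have hsb : H i i + s <= beta.
  apply: le_trans (hb c Xc); rewrite /mnorm_inf.
  apply: le_trans (le_bigmax _ _ i); rewrite (bigD1 i) //= ger0_norm //.
set S := \sum_(j | j != i) v 0 j * H i j.
have hS : `|S| <= s * N.
  rewrite /S /s mulr_suml; apply: le_trans (ler_norm_sum _ _ _) _.
  apply: ler_sum => j _; rewrite normrM mulrC ler_wpM2l //.
rewrite (bigD1 i) //= -/S.
have -> : v 0 i - eta * (v 0 i * H i i + S) = (1 - eta * H i i) * v 0 i - eta * S by ring.
apply: le_trans (ler_normB _ _) _.
rewrite !normrM (ger0_norm (ltW e0)).
have p1 : eta * s <= eta * H i i by rewrite ler_wpM2l // ltW.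
have p2 : eta * H i i + eta * s <= 2 by rewrite -mulrDr; apply: le_trans eb2; rewrite ler_wpM2l // ltW.
have hA : `|1 - eta * H i i| + eta * s <= 1.
  have [h|h] := lerP 0 (1 - eta * H i i).
    rewrite ger0_norm //; lra.
  rewrite ltr0_norm //; lra.
apply: le_trans (_ : `|1 - eta * H i i| * N + eta * (s * N) <= N).
  apply: lerD; first by rewrite ler_wpM2l.
  by rewrite ler_wpM2l // ltW.
rewrite mulrA -mulrDl; rewrite -[X in _ <= X]mul1r; rewrite ler_wpM2r //.
Qed.
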